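(* Let $\zeta_5$ be a primitive $5$-th root of unity. (1) $\left\{J_{\frac rs}(\zeta_5) : \tfrac rs>1\right\}=\{0,\ c,\ (\zeta_5-1)c,\ (\zeta_5^2+1)c : c=\pm\zeta_5^j,\ j=0,1,\dots,4\}$. (2) For an irreducible fraction $\frac rs>1$, $J_{\frac rs}(\zeta_5)=0$ if and only if $r\in 5\mathbb{Z}$ and $s\equiv 2$ or $3\pmod 5$.
   Context: Let $q$ be a formal parameter, $R_q=\begin{pmatrix} q & 1\\ 0 & 1\end{pmatrix}$, $S_q=\begin{pmatrix} 0 & -q^{-1}\\ 1 & 0\end{pmatrix}$, and for integers $c_1,\dots,c_k$ put $M_q(c_1,\dots,c_k)=R_q^{c_1}S_q\cdots R_q^{c_k}S_q$. Every irreducible fraction $\frac{r}{s}>1$ has a unique negative continued fraction expansion $\frac{r}{s}=c_1-\cfrac{1}{c_2-\cfrac{1}{\ddots-\cfrac{1}{c_k}}}$ with all $c_i\ge 2$; define $\mathcal{R}_{\frac rs}(q),\mathcal{S}_{\frac rs}(q)$ by $M_q(c_1,\dots,c_k)=\begin{pmatrix}\mathcal{R}_{\frac rs}(q) & *\\ \mathcal{S}_{\frac rs}(q) & *\end{pmatrix}$. Define $J_{\frac rs}(q)=q\,\mathcal{R}_{\frac rs}(q)+(1-q)\,\mathcal{S}_{\frac rs}(q)$; this is the normalized Jones polynomial of the rational (2-bridge) link $L(\frac rs)$, i.e. $\pm t^{-h}V_{L(r/s)}(t)|_{t=-q^{-1}}$ where $V$ is the Jones polynomial and $\pm t^h$ its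 leading term. *)

(* Defs.v *)
From HB Require Import structures.
From mathcomp Require Import all_boot all_order all_algebra all_field.
Set Implicit Arguments. Unset Strict Implicit. Unset Printing Implicit Defensive.
Import Order.TTheory GRing.Theory Num.Theory.
Local Open Scope ring_scope.

(* Negative continued fraction expansion r/s = c_1 - 1/(c_2 - 1/(... - 1/c_k)),
   all c_i >= 2, for coprime r > s >= 1.  Computed greedily:
   c_1 = ceil(r/s), and r/s = c_1 - 1/(s/(c_1 s - r)).  [fuel] bounds the
   recursion (fuel = r suffices since the numerators strictly decrease). *)
Fixpoint ncf_aux (fuel r s : nat) : seq nat :=
  match fuel with
  | 0 => [::]
  | f.+1 =>
      let c := ((r + s).-1 %/ s)%N in
      let d := (c * s - r)%N in
      if d == 0%N then [:: c] else c :: ncf_aux f s d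
  end.

Definition ncf (r s : nat) : seq nat := ncf_aux r r s.

Fixpoint ncf_val (cs : seq nat) : rat :=
  match cs with
  | [::] => 0
  | [:: c] => c%:R
  | c :: cs' => c%:R - (ncf_val cs')^-1
  end.

Section Jones.
Variable F : fieldType.

Definition Rq (q : F) : 'M[F]_2 :=
  \matrix_(i < 2, j < 2)
    (if (i == 0) && (j == 0) then q else if i == 0 then 1 else if j == 1 then 1 else 0).

Definition Sq (q : F) : 'M[F]_2 :=
  \matrix_(i < 2, j < 2)
    (if (i == 0) && (j == 1) then - q^-1 else if (i == 1) && (j == 0) then 1 else 0).

Definition Mq (q : F) (cs : seq nat) : 'M[F]_2 :=
  foldr (fun c A => (Rq q ^+ c) *m Sq q *m A) 1%:M cs.

Definition calR (r s : nat) (q : F) : F := Mq q (ncf r s) 0 0.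
Definition calS (r s : nat) (q : F) : F := Mq q (ncf r s) 1 0.

Definition Jones (r s : nat) (q : F) : F := q * calR r s q + (1 - q) * calS r s q.
End Jones.

(* Main.v *)
Require Import Defs.
From HB Require Import structures.
From mathcomp Require Import all_boot all_order all_algebra all_field.
From mathcomp Require Import zify ring lra.
Import GRing.Theory Num.Theory.
Local Open Scope ring_scope.

Definition K := (int * int * int * int)%type.
Definition zK : K := (0, 0, 0, 0).
Definition oneK : K := (1, 0, 0, 0).
Definition addK (x y : K) : K :=
  let '(a, b, c, d) := x in let '(a', b', c', d') := y in (a + a', b + b', c + c', d + d').
Definition negK (x : K) : K := let '(a, b, c, d) := x in (- a, - b, - c, - d).
Definition mzK (x : K) : K := let '(a, b, c, d) := x in (- d, a - d, b - d, c - d).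
Definition interpK (z : algC) (x : K) : algC :=
  let '(a, b, c, d) := x in a%:~R + b%:~R * z + c%:~R * z ^+ 2 + d%:~R * z ^+ 3.

Definition State := ((K * K) * (nat * nat))%type.
Definition Sst (st : State) : State :=
  let '((x, y), (a, b)) := st in ((negK (mzK (mzK (mzK (mzK y)))), x), ((5 - b) %% 5, a)%N).
Definition Rst (st : State) : State :=
  let '((x, y), (a, b)) := st in ((addK (mzK x) y, y), ((a + b) %% 5, b)%N).
Definition step (c : nat) (st : State) : State := iter c Rst (Sst st).
Definition init : State := ((oneK, zK), (1, 0)%N).
Definition colv (cs : seq nat) : State := foldr step init cs.
Definition Jrep (st : State) : K := addK (addK (mzK st.1.1) st.1.2) (negK (mzK st.1.2)).
Definition signK (b : bool) (x : K) : K := if b then negK x else x.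
Definition tgt (t : bool * nat * nat) : K :=
  let '(b, j, k) := t in
  let c := signK b (iter j mzK oneK) in
  match k with 0%N => c | 1%N => addK (mzK c) (negK c) | _ => addK (mzK (mzK c)) c end.
Definition condb (p : nat * nat) : bool := (p.1 == 0%N) && ((p.2 == 2%N) || (p.2 == 3%N)).
Definition hasT (P : bool * nat * nat -> bool) : bool :=
  has (fun b => has (fun j => has (fun k => P (b, j, k)) (iota 0 3)) (iota 0 5)) [:: false; true].
Definition Reach : seq State := [::
  (((Posz 1, Posz 0, Posz 0, Posz 0), (Posz 0, Posz 0, Posz 0, Posz 0)), (1%N, 0%N));
  (((Posz 0, Posz 0, Posz 0, Posz 0), (Posz 1, Posz 0, Posz 0, Posz 0)), (0%N, 1%N));
  (((Posz 1, Posz 0, Posz 0, Posz 0), (Posz 1, Posz 0, Posz 0, Posz 0)), (1%N, 1%N));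
  (((Posz 1, Posz 1, Posz 0, Posz 0), (Posz 1, Posz 0, Posz 0, Posz 0)), (2%N, 1%N));
  (((Posz 1, Posz 1, Posz 1, Posz 0), (Posz 1, Posz 0, Posz 0, Posz 0)), (3%N, 1%N));
  (((Posz 1, Posz 1, Posz 1, Posz 1), (Posz 1, Posz 0, Posz 0, Posz 0)), (4%N, 1%N));
  (((Posz 1, Posz 1, Posz 1, Posz 1), (Posz 1, Posz 1, Posz 1, Posz 1)), (4%N, 4%N));
  (((Posz 0, Posz 1, Posz 1, Posz 1), (Posz 1, Posz 1, Posz 1, Posz 1)), (3%N, 4%N));
  (((Posz 0, Posz 0, Posz 1, Posz 1), (Posz 1, Posz 1, Posz 1, Posz 1)), (2%N, 4%N));
  (((Posz 0, Posz 0, Posz 0, Posz 1), (Posz 1, Posz 1, Posz 1, Posz 1)), (1%N, 4%N));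
  (((Posz 0, Posz 0, Posz 0, Posz 0), (Posz 1, Posz 1, Posz 1, Posz 1)), (0%N, 4%N));
  (((Posz 0, Posz 0, Posz 0, Posz 1), (Posz 0, Posz 0, Posz 0, Posz 0)), (1%N, 0%N));
  (((Negz 0, Negz 0, Negz 0, Negz 0), (Posz 0, Posz 0, Posz 0, Posz 0)), (1%N, 0%N));
  (((Posz 0, Posz 1, Posz 0, Posz 0), (Posz 0, Posz 0, Posz 0, Posz 0)), (1%N, 0%N));
  (((Posz 0, Posz 0, Posz 1, Posz 0), (Posz 0, Posz 0, Posz 0, Posz 0)), (1%N, 0%N));
  (((Posz 0, Posz 0, Posz 0, Posz 0), (Posz 0, Posz 0, Posz 1, Posz 0)), (0%N, 1%N));
  (((Posz 0, Posz 0, Posz 1, Posz 0), (Posz 0, Posz 0, Posz 1, Posz 0)), (1%N, 1%N));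
  (((Posz 0, Posz 0, Posz 1, Posz 1), (Posz 0, Posz 0, Posz 1, Posz 0)), (2%N, 1%N));
  (((Negz 0, Negz 0, Posz 0, Posz 0), (Posz 0, Posz 0, Posz 1, Posz 0)), (3%N, 1%N));
  (((Posz 0, Negz 0, Posz 0, Posz 0), (Posz 0, Posz 0, Posz 1, Posz 0)), (4%N, 1%N));
  (((Posz 0, Negz 0, Posz 0, Posz 0), (Posz 0, Negz 0, Posz 0, Posz 0)), (4%N, 4%N));
  (((Posz 0, Negz 0, Negz 0, Posz 0), (Posz 0, Negz 0, Posz 0, Posz 0)), (3%N, 4%N));
  (((Posz 0, Negz 0, Negz 0, Negz 0), (Posz 0, Negz 0, Posz 0, Posz 0)), (2%N, 4%N));
  (((Posz 1, Posz 0, Posz 0, Posz 0), (Posz 0, Negz 0, Posz 0, Posz 0)), (1%N, 4%N));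
  (((Posz 0, Posz 0, Posz 0, Posz 0), (Posz 0, Negz 0, Posz 0, Posz 0)), (0%N, 4%N));
  (((Posz 1, Posz 0, Posz 0, Posz 0), (Posz 0, Negz 0, Negz 0, Negz 0)), (1%N, 2%N));
  (((Posz 0, Posz 0, Negz 0, Negz 0), (Posz 0, Negz 0, Negz 0, Negz 0)), (3%N, 2%N));
  (((Posz 1, Posz 0, Posz 0, Negz 0), (Posz 0, Negz 0, Negz 0, Negz 0)), (0%N, 2%N));
  (((Posz 1, Posz 1, Posz 0, Posz 0), (Posz 0, Negz 0, Negz 0, Negz 0)), (2%N, 2%N));
  (((Posz 0, Posz 0, Posz 0, Negz 0), (Posz 0, Negz 0, Negz 0, Negz 0)), (4%N, 2%N));
  (((Posz 1, Posz 1, Posz 1, Posz 0), (Posz 0, Posz 0, Posz 0, Negz 0)), (3%N, 4%N));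
  (((Posz 0, Posz 1, Posz 1, Posz 0), (Posz 0, Posz 0, Posz 0, Negz 0)), (2%N, 4%N));
  (((Posz 0, Posz 0, Posz 1, Posz 0), (Posz 0, Posz 0, Posz 0, Negz 0)), (1%N, 4%N));
  (((Posz 0, Posz 0, Posz 0, Posz 0), (Posz 0, Posz 0, Posz 0, Negz 0)), (0%N, 4%N));
  (((Posz 0, Posz 0, Posz 0, Negz 0), (Posz 0, Posz 0, Posz 0, Negz 0)), (4%N, 4%N));
  (((Posz 0, Posz 0, Posz 1, Posz 0), (Posz 0, Posz 1, Posz 1, Posz 0)), (1%N, 2%N));
  (((Posz 0, Posz 1, Posz 1, Posz 1), (Posz 0, Posz 1, Posz 1, Posz 0)), (3%N, 2%N));
  (((Negz 0, Posz 0, Posz 1, Posz 0), (Posz 0, Posz 1, Posz 1, Posz 0)), (0%N, 2%N));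
  (((Posz 0, Posz 0, Posz 1, Posz 1), (Posz 0, Posz 1, Posz 1, Posz 0)), (2%N, 2%N));
  (((Negz 0, Posz 0, Posz 0, Posz 0), (Posz 0, Posz 1, Posz 1, Posz 0)), (4%N, 2%N));
  (((Negz 0, Negz 0, Posz 0, Posz 0), (Negz 0, Posz 0, Posz 0, Posz 0)), (3%N, 4%N));
  (((Negz 0, Negz 0, Negz 0, Posz 0), (Negz 0, Posz 0, Posz 0, Posz 0)), (2%N, 4%N));
  (((Negz 0, Negz 0, Negz 0, Negz 0), (Negz 0, Posz 0, Posz 0, Posz 0)), (1%N, 4%N));
  (((Posz 0, Posz 0, Posz 0, Posz 0), (Negz 0, Posz 0, Posz 0, Posz 0)), (0%N, 4%N));
  (((Negz 0, Posz 0, Posz 0, Posz 0), (Negz 0, Posz 0, Posz 0, Posz 0)), (4%N, 4%N));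
  (((Negz 0, Negz 0, Negz 0, Negz 0), (Negz 0, Negz 0, Negz 0, Negz 0)), (1%N, 1%N));
  (((Posz 0, Negz 0, Negz 0, Negz 0), (Negz 0, Negz 0, Negz 0, Negz 0)), (2%N, 1%N));
  (((Posz 0, Posz 0, Negz 0, Negz 0), (Negz 0, Negz 0, Negz 0, Negz 0)), (3%N, 1%N));
  (((Posz 0, Posz 0, Posz 0, Negz 0), (Negz 0, Negz 0, Negz 0, Negz 0)), (4%N, 1%N));
  (((Posz 0, Posz 0, Posz 0, Posz 0), (Negz 0, Negz 0, Negz 0, Negz 0)), (0%N, 1%N));
  (((Posz 0, Posz 0, Posz 0, Negz 0), (Posz 0, Posz 0, Posz 0, Posz 0)), (4%N, 0%N));
  (((Posz 1, Posz 1, Posz 1, Posz 1), (Posz 0, Posz 0, Posz 0, Posz 0)), (4%N, 0%N));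
  (((Negz 0, Posz 0, Posz 0, Posz 0), (Posz 0, Posz 0, Posz 0, Posz 0)), (4%N, 0%N));
  (((Posz 0, Negz 0, Posz 0, Posz 0), (Posz 0, Posz 0, Posz 0, Posz 0)), (4%N, 0%N));
  (((Posz 0, Posz 0, Negz 0, Posz 0), (Posz 0, Posz 0, Posz 0, Posz 0)), (4%N, 0%N));
  (((Posz 0, Posz 0, Posz 0, Posz 0), (Posz 0, Posz 0, Negz 0, Posz 0)), (0%N, 4%N));
  (((Posz 0, Posz 0, Negz 0, Posz 0), (Posz 0, Posz 0, Negz 0, Posz 0)), (4%N, 4%N));
  (((Posz 0, Posz 0, Negz 0, Negz 0), (Posz 0, Posz 0, Negz 0, Posz 0)), (3%N, 4%N));
  (((Posz 1, Posz 1, Posz 0, Posz 0), (Posz 0, Posz 0, Negz 0, Posz 0)), (2%N, 4%N));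
  (((Posz 0, Posz 1, Posz 0, Posz 0), (Posz 0, Posz 0, Negz 0, Posz 0)), (1%N, 4%N));
  (((Posz 0, Posz 1, Posz 0, Posz 0), (Posz 0, Posz 1, Posz 0, Posz 0)), (1%N, 1%N));
  (((Posz 0, Posz 1, Posz 1, Posz 0), (Posz 0, Posz 1, Posz 0, Posz 0)), (2%N, 1%N));
  (((Posz 0, Posz 1, Posz 1, Posz 1), (Posz 0, Posz 1, Posz 0, Posz 0)), (3%N, 1%N));
  (((Negz 0, Posz 0, Posz 0, Posz 0), (Posz 0, Posz 1, Posz 0, Posz 0)), (4%N, 1%N));
  (((Posz 0, Posz 0, Posz 0, Posz 0), (Posz 0, Posz 1, Posz 0, Posz 0)), (0%N, 1%N));
  (((Negz 0, Posz 0, Posz 0, Posz 0), (Posz 0, Posz 1, Posz 1, Posz 1)), (4%N, 3%N));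
  (((Posz 0, Posz 0, Posz 1, Posz 1), (Posz 0, Posz 1, Posz 1, Posz 1)), (2%N, 3%N));
  (((Negz 0, Posz 0, Posz 0, Posz 1), (Posz 0, Posz 1, Posz 1, Posz 1)), (0%N, 3%N));
  (((Negz 0, Negz 0, Posz 0, Posz 0), (Posz 0, Posz 1, Posz 1, Posz 1)), (3%N, 3%N));
  (((Posz 0, Posz 0, Posz 0, Posz 1), (Posz 0, Posz 1, Posz 1, Posz 1)), (1%N, 3%N));
  (((Negz 0, Negz 0, Negz 0, Posz 0), (Posz 0, Posz 0, Posz 0, Posz 1)), (2%N, 1%N));
  (((Posz 0, Negz 0, Negz 0, Posz 0), (Posz 0, Posz 0, Posz 0, Posz 1)), (3%N, 1%N));
  (((Posz 0, Posz 0, Negz 0, Posz 0), (Posz 0, Posz 0, Posz 0, Posz 1)), (4%N, 1%N));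
  (((Posz 0, Posz 0, Posz 0, Posz 0), (Posz 0, Posz 0, Posz 0, Posz 1)), (0%N, 1%N));
  (((Posz 0, Posz 0, Posz 0, Posz 1), (Posz 0, Posz 0, Posz 0, Posz 1)), (1%N, 1%N));
  (((Posz 0, Posz 0, Negz 0, Posz 0), (Posz 0, Negz 0, Negz 0, Posz 0)), (4%N, 3%N));
  (((Posz 0, Negz 0, Negz 0, Negz 0), (Posz 0, Negz 0, Negz 0, Posz 0)), (2%N, 3%N));
  (((Posz 1, Posz 0, Negz 0, Posz 0), (Posz 0, Negz 0, Negz 0, Posz 0)), (0%N, 3%N));
  (((Posz 0, Posz 0, Negz 0, Negz 0), (Posz 0, Negz 0, Negz 0, Posz 0)), (3%N, 3%N));
  (((Posz 1, Posz 0, Posz 0, Posz 0), (Posz 0, Negz 0, Negz 0, Posz 0)), (1%N, 3%N));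
  (((Posz 1, Posz 1, Posz 0, Posz 0), (Posz 0, Posz 0, Negz 0, Negz 0)), (2%N, 3%N));
  (((Posz 0, Posz 1, Posz 0, Negz 0), (Posz 0, Posz 0, Negz 0, Negz 0)), (0%N, 3%N));
  (((Posz 1, Posz 1, Posz 1, Posz 0), (Posz 0, Posz 0, Negz 0, Negz 0)), (3%N, 3%N));
  (((Posz 0, Posz 1, Posz 0, Posz 0), (Posz 0, Posz 0, Negz 0, Negz 0)), (1%N, 3%N));
  (((Posz 0, Posz 0, Posz 0, Negz 0), (Posz 0, Posz 0, Negz 0, Negz 0)), (4%N, 3%N));
  (((Posz 0, Posz 1, Posz 1, Posz 0), (Posz 1, Posz 1, Posz 1, Posz 0)), (2%N, 3%N));
  (((Posz 1, Posz 1, Posz 2, Posz 1), (Posz 1, Posz 1, Posz 1, Posz 0)), (0%N, 3%N));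
  (((Posz 0, Posz 1, Posz 1, Posz 1), (Posz 1, Posz 1, Posz 1, Posz 0)), (3%N, 3%N));
  (((Posz 0, Posz 0, Posz 1, Posz 0), (Posz 1, Posz 1, Posz 1, Posz 0)), (1%N, 3%N));
  (((Posz 1, Posz 1, Posz 1, Posz 1), (Posz 1, Posz 1, Posz 1, Posz 0)), (4%N, 3%N));
  (((Posz 0, Posz 0, Posz 1, Posz 1), (Posz 1, Posz 1, Posz 2, Posz 1)), (2%N, 0%N));
  (((Posz 0, Negz 0, Posz 0, Posz 1), (Posz 0, Posz 0, Posz 1, Posz 1)), (0%N, 2%N));
  (((Negz 0, Negz 0, Negz 0, Posz 0), (Posz 0, Posz 0, Posz 1, Posz 1)), (2%N, 2%N));
  (((Posz 0, Negz 0, Posz 0, Posz 0), (Posz 0, Posz 0, Posz 1, Posz 1)), (4%N, 2%N));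
  (((Posz 0, Posz 0, Posz 0, Posz 1), (Posz 0, Posz 0, Posz 1, Posz 1)), (1%N, 2%N));
  (((Negz 0, Negz 0, Posz 0, Posz 0), (Posz 0, Posz 0, Posz 1, Posz 1)), (3%N, 2%N));
  (((Posz 0, Negz 0, Negz 0, Posz 0), (Negz 0, Negz 0, Posz 0, Posz 0)), (3%N, 3%N));
  (((Negz 0, Negz 0, Negz 0, Negz 0), (Negz 0, Negz 0, Posz 0, Posz 0)), (1%N, 3%N));
  (((Posz 0, Negz 0, Posz 0, Posz 0), (Negz 0, Negz 0, Posz 0, Posz 0)), (4%N, 3%N));
  (((Negz 0, Negz 0, Negz 0, Posz 0), (Negz 0, Negz 0, Posz 0, Posz 0)), (2%N, 3%N));
  (((Negz 0, Negz 1, Negz 0, Negz 0), (Negz 0, Negz 0, Posz 0, Posz 0)), (0%N, 3%N));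
  (((Posz 0, Negz 0, Negz 0, Negz 0), (Negz 0, Negz 1, Negz 0, Negz 0)), (2%N, 0%N));
  (((Posz 0, Negz 0, Negz 0, Negz 0), (Negz 0, Negz 0, Negz 0, Posz 0)), (2%N, 2%N));
  (((Posz 0, Posz 0, Negz 0, Posz 0), (Negz 0, Negz 0, Negz 0, Posz 0)), (4%N, 2%N));
  (((Negz 0, Negz 0, Negz 0, Negz 0), (Negz 0, Negz 0, Negz 0, Posz 0)), (1%N, 2%N));
  (((Posz 0, Negz 0, Negz 0, Posz 0), (Negz 0, Negz 0, Negz 0, Posz 0)), (3%N, 2%N));
  (((Negz 0, Negz 0, Negz 1, Negz 0), (Negz 0, Negz 0, Negz 0, Posz 0)), (0%N, 2%N));
  (((Posz 0, Posz 0, Negz 0, Negz 0), (Negz 0, Negz 0, Negz 1, Negz 0)), (3%N, 0%N));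
  (((Posz 0, Negz 0, Negz 0, Posz 0), (Posz 0, Negz 0, Posz 0, Posz 1)), (3%N, 0%N));
  (((Posz 0, Posz 1, Posz 1, Posz 0), (Posz 0, Posz 1, Posz 0, Negz 0)), (2%N, 0%N));
  (((Posz 0, Posz 1, Posz 1, Posz 0), (Posz 1, Posz 1, Posz 0, Posz 0)), (2%N, 2%N));
  (((Posz 1, Posz 1, Posz 1, Posz 1), (Posz 1, Posz 1, Posz 0, Posz 0)), (4%N, 2%N));
  (((Posz 0, Posz 1, Posz 0, Posz 0), (Posz 1, Posz 1, Posz 0, Posz 0)), (1%N, 2%N));
  (((Posz 1, Posz 1, Posz 1, Posz 0), (Posz 1, Posz 1, Posz 0, Posz 0)), (3%N, 2%N));
  (((Posz 1, Posz 2, Posz 1, Posz 1), (Posz 1, Posz 1, Posz 0, Posz 0)), (0%N, 2%N));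
  (((Posz 0, Posz 1, Posz 1, Posz 1), (Posz 1, Posz 2, Posz 1, Posz 1)), (3%N, 0%N));
  (((Posz 1, Posz 1, Posz 0, Posz 0), (Posz 1, Posz 0, Negz 0, Posz 0)), (2%N, 0%N));
  (((Negz 0, Negz 0, Negz 0, Posz 0), (Negz 0, Posz 0, Posz 0, Posz 1)), (2%N, 0%N));
  (((Negz 0, Negz 0, Posz 0, Posz 0), (Negz 0, Posz 0, Posz 1, Posz 0)), (3%N, 0%N));
  (((Posz 1, Posz 1, Posz 1, Posz 0), (Posz 1, Posz 0, Posz 0, Negz 0)), (3%N, 0%N))].
Definition wit (t : bool * nat * nat) : nat * nat :=
  match t with
  | (false, 0%N, 0%N) => (6%N, 1%N)
  | (false, 0%N, 1%N) => (30%N, 19%N)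
  | (false, 0%N, 2%N) => (2%N, 1%N)
  | (false, 1%N, 0%N) => (6%N, 5%N)
  | (false, 1%N, 1%N) => (20%N, 9%N)
  | (false, 1%N, 2%N) => (17%N, 11%N)
  | (false, 2%N, 0%N) => (11%N, 5%N)
  | (false, 2%N, 1%N) => (45%N, 14%N)
  | (false, 2%N, 2%N) => (27%N, 16%N)
  | (false, 3%N, 0%N) => (16%N, 5%N)
  | (false, 3%N, 1%N) => (80%N, 19%N)
  | (false, 3%N, 2%N) => (7%N, 2%N)
  | (false, 4%N, 0%N) => (21%N, 5%N)
  | (false, 4%N, 1%N) => (5%N, 4%N)
  | (false, 4%N, 2%N) => (12%N, 7%N)
  | (true, 0%N, 0%N) => (24%N, 5%N)
  | (true, 0%N, 1%N) => (5%N, 1%N)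
  | (true, 0%N, 2%N) => (28%N, 11%N)
  | (true, 1%N, 0%N) => (4%N, 1%N)
  | (true, 1%N, 1%N) => (20%N, 11%N)
  | (true, 1%N, 2%N) => (8%N, 3%N)
  | (true, 2%N, 0%N) => (9%N, 2%N)
  | (true, 2%N, 1%N) => (15%N, 11%N)
  | (true, 2%N, 2%N) => (3%N, 2%N)
  | (true, 3%N, 0%N) => (4%N, 3%N)
  | (true, 3%N, 1%N) => (25%N, 11%N)
  | (true, 3%N, 2%N) => (18%N, 7%N)
  | (true, 4%N, 0%N) => (9%N, 4%N)
  | (true, 4%N, 1%N) => (80%N, 31%N)
  | (true, 4%N, 2%N) => (3%N, 1%N)
  | _ => (0%N, 0%N) end.
Lemma chk_init : init \in Reach. Proof. by vm_compute. Qed.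
Lemma chk_clos : all (fun st => all (fun c => step c st \in Reach) (iota 0 5)) Reach.
Proof. by vm_compute. Qed.
Lemma chk_per : all (fun st => iter 5 Rst (Sst st) == Sst st) Reach.
Proof. by vm_compute. Qed.
Lemma chk_zero : all (fun st => (Jrep st == zK) == condb st.2) Reach.
Proof. by vm_compute. Qed.
Lemma chk_val : all (fun st => (Jrep st == zK) || hasT (fun t => Jrep st == tgt t)) Reach.
Proof. by vm_compute. Qed.
Lemma chk_wit : ~~ hasT (fun t => let rs := wit t in
   ~~ [&& (0 < rs.2)%N, (rs.2 < rs.1)%N, coprime rs.1 rs.2 & Jrep (colv (ncf rs.1 rs.2)) == tgt t]).
Proof. by vm_compute. Qed.
Lemma chk_0 : Jrep (colv (ncf 5 2)) = zK. Proof. by vm_compute. Qed.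

Lemma mul2_0 (A B : 'M[algC]_2) i : (A *m B) i 0 = A i 0 * B 0 0 + A i 1 * B 1 0.
Proof.
rewrite mxE big_ord_recr big_ord_recr big_ord0 /= add0r.
by congr (A i _ * B _ _ + A i _ * B _ _); apply/val_inj.
Qed.

Lemma expS (A P : 'M[algC]_2) n : A ^+ n.+1 *m P = A *m (A ^+ n *m P).
Proof. by rewrite exprS mulmxA. Qed.

Section Z.
Lemma z5 {z : algC} (hz : 5.-primitive_root z) : z ^+ 5 = 1.
Proof. exact: prim_expr_order hz. Qed.

Lemma zn1 {z : algC} (hz : 5.-primitive_root z) : z != 1.
Proof. apply/negP => /eqP z1. have := prim_order_dvd hz 1. by rewrite expr1 z1 eqxx. Qed.

Lemma zsum {z : algC} (hz : 5.-primitive_root z) : 1 + z + z ^+ 2 + z ^+ 3 + z ^+ 4 = 0.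
Proof.
have : (z - 1) * (1 + z + z ^+ 2 + z ^+ 3 + z ^+ 4) = z ^+ 5 - 1 by ring.
rewrite (z5 hz) subrr => /eqP; rewrite mulf_eq0 subr_eq0 (negbTE (zn1 hz)) /=.
by move/eqP.
Qed.

Lemma z0 {z : algC} (hz : 5.-primitive_root z) : z != 0.
Proof. apply/negP => /eqP e. have := z5 hz. rewrite e expr0n /= => /eqP. by rewrite eq_sym oner_eq0. Qed.

Lemma zinv {z : algC} (hz : 5.-primitive_root z) : z^-1 = z ^+ 4.
Proof. apply: (mulfI (z0 hz)). by rewrite mulfV ?z0 // -exprS (z5 hz). Qed.

Lemma z2p1 {z : algC} (hz : 5.-primitive_root z) : z ^+ 2 + 1 != 0.
Proof.
apply/negP => /eqP e. have := prim_order_dvd hz 4.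
have -> : z ^+ 4 = 1.
  have -> : z ^+ 4 = (z ^+ 2) ^+ 2 by rewrite -exprM.
  have -> : z ^+ 2 = -1 by apply/eqP; rewrite -subr_eq0 opprK e.
  by rewrite sqrrN expr1n.
by rewrite eqxx.
Qed.
End Z.

Lemma interp_add z x y : interpK z (addK x y) = interpK z x + interpK z y.
Proof. case: x => [[[a b] c] d]; case: y => [[[a' b'] c'] d'] /=. rewrite !intrD. ring. Qed.

Lemma interp_neg z x : interpK z (negK x) = - interpK z x.
Proof. case: x => [[[a b] c] d] /=. rewrite !intrN. ring. Qed.

Lemma interp_zK z : interpK z zK = 0.
Proof. rewrite /=. ring. Qed.

Lemma interp_one z : interpK z oneK = 1.
Proof. rewrite /=. ring. Qed.

Lemma interp_mz {z : algC} (hz : 5.-primitive_root z) x : interpK z (mzK x) = z * interpK z x.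
Proof.
case: x => [[[a b] c] d] /=. rewrite !intrB !intrN.
apply/eqP; rewrite -subr_eq0; apply/eqP.
transitivity (- d%:~R * (1 + z + z ^+ 2 + z ^+ 3 + z ^+ 4)); first ring.
by rewrite (zsum hz) mulr0.
Qed.

Lemma iterR {z : algC} (hz : 5.-primitive_root z) n (P : 'M[algC]_2) st :
  P 0 0 = interpK z st.1.1 -> P 1 0 = interpK z st.1.2 ->
  (Rq z ^+ n *m P) 0 0 = interpK z (iter n Rst st).1.1 /\
  (Rq z ^+ n *m P) 1 0 = interpK z (iter n Rst st).1.2.
Proof.
move=> h0 h1; elim: n => [|n [IH0 IH1]]; first by rewrite expr0 mul1mx.
rewrite expS; move: IH0 IH1; set Q := Rq z ^+ n *m P => IH0 IH1; clearbody Q; rewrite !mul2_0 IH0 IH1 iterS.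
case: (iter n Rst st) => [[x y] [a b]] /=.
rewrite /Rq !mxE /=. rewrite interp_add (interp_mz hz); split; ring.
Qed.

Lemma MqS (z : algC) c cs : Mq z (c :: cs) = Rq z ^+ c *m Sq z *m Mq z cs.
Proof. by []. Qed.

Lemma MqE {z : algC} (hz : 5.-primitive_root z) cs :
  Mq z cs 0 0 = interpK z (colv cs).1.1 /\ Mq z cs 1 0 = interpK z (colv cs).1.2.
Proof.
elim: cs => [|c cs [IH0 IH1]].
  rewrite /Mq /= !mxE /=. split; ring.
rewrite MqS -mulmxA.
change (colv (c :: cs)) with (iter c Rst (Sst (colv cs))).
apply: (iterR hz).
  rewrite mul2_0 /Sq !mxE /= IH0 IH1.
  case: (colv cs) => [[x y] [a b]] /=.
  rewrite interp_neg !(interp_mz hz) (zinv hz). ring.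
rewrite mul2_0 /Sq !mxE /= IH0 IH1.
case: (colv cs) => [[x y] [a b]] /=. ring.
Qed.

Lemma JonesE {z : algC} (hz : 5.-primitive_root z) r s :
  Jones r s z = interpK z (Jrep (colv (ncf r s))).
Proof.
rewrite /Jones /calR /calS; have [-> ->] := MqE hz (ncf r s).
rewrite /Jrep !interp_add interp_neg !(interp_mz hz). ring.
Qed.

Lemma iter5k X k : iter 5 Rst X = X -> iter (5 * k) Rst X = X.
Proof. move=> h; elim: k => [|k IH]; first by rewrite muln0. by rewrite mulnS iterD IH h. Qed.

Lemma step_mod st c : st \in Reach -> step c st = step (c %% 5) st.
Proof.
move=> H; rewrite /step {1}(divn_eq c 5) addnC iterD mulnC iter5k //.
apply/eqP; exact: (allP chk_per st H).
Qed.

Lemma step_in st c : st \in Reach -> step c st \in Reach.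
Proof.
move=> H; rewrite step_mod //. have /allP := allP chk_clos st H; apply.
by rewrite mem_iota /= ltn_pmod.
Qed.

Lemma colv_in cs : colv cs \in Reach.
Proof. elim: cs => [|c cs IH]; [exact: chk_init | exact: step_in]. Qed.

Lemma iterR2 n st : (0 < n)%N -> (iter n Rst st).2 = (((st.2.1 + n * st.2.2) %% 5), st.2.2)%N.
Proof.
case: st => [[x0 y0] [a b]] /=. elim: n => [|n IH] // _. rewrite iterS.
case: n IH => [|n] IH; first by rewrite /= mul1n.
move: (IH isT); case: (iter n.+1 Rst (x0, y0, (a, b))) => [[x y] [a' b']] /= [-> ->].
by rewrite modnDml -addnA [(_ * b + b)%N]addnC -mulSn.
Qed.

Lemma step2 c st : (0 < c)%N ->
  (step c st).2 = ((((5 - st.2.2) %% 5) + c * st.2.1) %% 5, st.2.1)%N.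
Proof. move=> c0; rewrite /step iterR2 //; by case: st => [[x0 y0] [a b]]. Qed.

Lemma modfact c s d r : (r + d = c * s)%N ->
  (((5 - d %% 5) %% 5 + c * (s %% 5)) %% 5 = r %% 5)%N.
Proof.
move=> e. rewrite modnDml -modnDmr modnMmr modnDmr -e.
rewrite {2}(divn_eq d 5). have := ltn_pmod d (isT : (0 < 5)%N).
set m := (d %% 5)%N; set q := (d %/ 5)%N => hm.
rewrite (_ : (5 - m + (r + (q * 5 + m)) = (q + 1) * 5 + r)%N); last by lia.
by rewrite modnMDl.
Qed.

Lemma colvB f r s : (0 < s)%N -> (s < r)%N -> coprime r s -> (r <= f)%N ->
  (colv (ncf_aux f r s)).2 = (r %% 5, s %% 5)%N.
Proof.
elim: f r s => [|f IH] r s s0 sr co rf; first by lia.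
rewrite /=. set c := ((r + s).-1 %/ s)%N. set d := (c * s - r)%N.
have e := divn_eq (r + s).-1 s. have m := ltn_pmod (r + s).-1 s0.
rewrite -/c in e. move: e m. set m0 := ((r + s).-1 %% s)%N. set cs := (c * s)%N => e m.
have hcs : (r <= cs < r + s)%N by lia.
have c0 : (0 < c)%N.
  rewrite lt0n; apply/eqP => c00. move: hcs; rewrite /cs c00 mul0n. lia.
case: ifP => [/eqP d0 | dn0].
  have rcs : r = cs by lia.
  have s1 : s = 1%N.
    move: co; rewrite /coprime rcs /cs gcdnC gcdnMl. by move/eqP.
  rewrite /= step2 //=. rewrite s1 muln1 add0n. rewrite rcs /cs s1 muln1. by [].
rewrite /= step2 // IH //; last by lia.
- congr (_, _). apply: modfact. rewrite /d -/cs. lia.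
- rewrite lt0n dn0 //.
- rewrite /d -/cs. lia.
- rewrite /coprime. have g1 : (gcdn s d %| r)%N.
    have -> : r = (c * s - d)%N by rewrite /d -/cs; lia.
    apply: dvdn_sub; [apply: dvdn_mull; apply: dvdn_gcdl | apply: dvdn_gcdr].
  have : (gcdn s d %| gcdn r s)%N by rewrite dvdn_gcd g1 dvdn_gcdl.
  by rewrite (eqP co) dvdn1.
Qed.

Lemma colvB' r s : (0 < s)%N -> (s < r)%N -> coprime r s ->
  (colv (ncf r s)).2 = (r %% 5, s %% 5)%N.
Proof. move=> *; exact: colvB. Qed.

Lemma interp_iter {z : algC} (hz : 5.-primitive_root z) j : interpK z (iter j mzK oneK) = z ^+ j.
Proof. elim: j => [|j IH]; first exact: interp_one. by rewrite iterS (interp_mz hz) IH exprS. Qed.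

Lemma interp_sign z b x : interpK z (signK b x) = (-1) ^+ b * interpK z x.
Proof. by case: b; rewrite /= ?interp_neg ?expr1 ?expr0 ?mulN1r ?mul1r. Qed.

Lemma tgtE {z : algC} (hz : 5.-primitive_root z) (b : bool) j :
  let c := (-1) ^+ b * z ^+ j in
  [/\ interpK z (tgt (b, j, 0%N)) = c, interpK z (tgt (b, j, 1%N)) = (z - 1) * c
    & forall k, (2 <= k)%N -> interpK z (tgt (b, j, k)) = (z ^+ 2 + 1) * c].
Proof.
move=> c; split.
- by rewrite /= interp_sign (interp_iter hz).
- rewrite /= interp_add interp_neg (interp_mz hz) interp_sign (interp_iter hz) /c. ring.
- case=> [|[|k]] // _.
  rewrite /= interp_add !(interp_mz hz) interp_sign (interp_iter hz) /c. ring.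
Qed.

Lemma c_nz {z : algC} (hz : 5.-primitive_root z) (b : bool) j : (-1) ^+ b * z ^+ j != 0.
Proof. by rewrite mulf_neq0 ?signr_eq0 // expf_neq0 // (z0 hz). Qed.

Lemma tgt_nz {z : algC} (hz : 5.-primitive_root z) (b : bool) j k : interpK z (tgt (b, j, k)) != 0.
Proof.
have [h0 h1 h2] := tgtE hz b j.
case: k => [|[|k]]; first by rewrite h0 (c_nz hz).
  by rewrite h1 mulf_neq0 ?(c_nz hz) // subr_eq0 (zn1 hz).
by rewrite h2 // mulf_neq0 ?(c_nz hz) // (z2p1 hz).
Qed.

Lemma hasTE P : hasT P -> exists b j k, [/\ (j < 5)%N, (k < 3)%N & P (b, j, k)].
Proof.
case/hasP => b _ /hasP [j]; rewrite mem_iota => /andP [_ hj] /hasP [k].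
rewrite mem_iota => /andP [_ hk] hp. by exists b, j, k.
Qed.

Lemma witP (b : bool) j k : (j < 5)%N -> (k < 3)%N ->
  let rs := wit (b, j, k) in
  [&& (0 < rs.2)%N, (rs.2 < rs.1)%N, coprime rs.1 rs.2 & Jrep (colv (ncf rs.1 rs.2)) == tgt (b, j, k)].
Proof.
move=> hj hk; apply/negPn/negP => H; move/negP: chk_wit; apply.
apply/hasP; exists b; first by case: b {H}.
apply/hasP; exists j; first by rewrite mem_iota.
apply/hasP; exists k; first by rewrite mem_iota.
exact: H.
Qed.

Theorem corollary3p10 (z : algC) (hz : 5.-primitive_root z) :
  (* (1) the set of values J_{r/s}(zeta_5), r/s > 1 irreducible *)
  (forall x : algC,
     (exists r s : nat, [/\ (0 < s)%N, (s < r)%N, coprime r s & x = Jones r s z])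
     <->
     (x = 0 \/
      exists (b : bool) (j : nat), (j < 5)%N /\
        let c := (-1) ^+ b * z ^+ j in
        [\/ x = c, x = (z - 1) * c | x = (z ^+ 2 + 1) * c]))
  /\
  (* (2) vanishing criterion *)
  (forall r s : nat, (0 < s)%N -> (s < r)%N -> coprime r s ->
     (Jones r s z = 0 <->
      (5 %| r)%N /\ (s %% 5 = 2 \/ s %% 5 = 3)%N)).
Proof.
split.
  move=> x; split.
    move=> [r [s [s0 sr co ->]]].
    rewrite (JonesE hz).
    have hin := colv_in (ncf r s).
    case: (boolP (Jrep (colv (ncf r s)) == zK)) => [/eqP -> | hnz].
      by left; rewrite interp_zK.
    right. have := allP chk_val _ hin. rewrite (negbTE hnz) /=.
    move/hasTE => [b [j [k [hj hk /eqP ->]]]].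
    exists b, j; split => //.
    have [h0 h1 h2] := tgtE hz b j.
    case: k hk => [|[|[|k]]] // _; [apply: Or31 | apply: Or32 | apply: Or33].
    - exact: h0.
    - exact: h1.
    - exact: h2.
  case=> [-> | [b [j [hj hc]]]].
    exists 5%N, 2%N; split => //. by rewrite (JonesE hz) chk_0 interp_zK.
  have [h0 h1 h2] := tgtE hz b j.
  have Hk : exists2 k, (k < 3)%N & x = interpK z (tgt (b, j, k)).
    case: hc => ->; [exists 0%N | exists 1%N | exists 2%N] => //. by rewrite h2.
  case: Hk => k hk ->.
  have /and4P [h1' h2' h3' /eqP h4'] := witP b j k hj hk.
  exists (wit (b, j, k)).1, (wit (b, j, k)).2; split => //.
  by rewrite (JonesE hz) h4'.
move=> r s s0 sr co.
have hin := colv_in (ncf r s).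
have hB := colvB' r s s0 sr co.
have hz0 := allP chk_zero _ hin. rewrite hB in hz0.
rewrite (JonesE hz). split.
  move=> J0.
  case: (boolP (Jrep (colv (ncf r s)) == zK)) => [hj | hnz].
    move: hz0; rewrite hj eq_sym => /eqP; rewrite /condb /=.
    move/andP => [r0 /orP [/eqP e | /eqP e]]; split => //; by [left | right].
  have := allP chk_val _ hin. rewrite (negbTE hnz) /=.
  move/hasTE => [b [j [k [hj hk /eqP e]]]].
  by move: J0; rewrite e => /eqP; rewrite (negbTE (tgt_nz hz b j k)).
move=> [r0 hs].
have : condb (r %% 5, s %% 5)%N.
  rewrite /condb /=. move: r0; rewrite /dvdn => ->.
  by case: hs => ->.
rewrite -(eqP hz0) => /eqP ->. exact: interp_zK.
Qed.
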